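(* Let $U$, $s$ and $r$ be as follows: $n\ge3$, $s$ an $n$-bit string with $s_1=0,s_2=1$, $U$ an $n$-qubit unitary with $U|0^n\rangle=|0^n\rangle$ preserving the span $\mathcal S$ of basis states $|y\rangle$ with $y$ a Fibonacci string with $y_1=0,y_2=1$, and $|s\rangle\in\mathcal S$; $r\in\{-1,0,1\}$ is the output of the control-free echo-verification circuit described in the context. Let $r'=(-1)^x$ where $x$ is the outcome of measuring the ancilla in the vanilla Hadamard test: an ancilla in $|0\rangle$ and a register in $|s\rangle$, apply $H$ to the ancilla, apply controlled-$U$ (controlled on the ancilla), apply $H$ to the ancilla, measure the ancilla. Then $\mathbb E[r']=\mathrm{Re}\langle s|U|s\rangle$, $\mathrm{Var}(r')=1-(\mathrm{Re}\langle s|U|s\rangle)^2$, and $$\mathrm{Var}(r)=\mathrm{Var}(r')-\frac{1-|\langle s|U|s\rangle|^2}{2}\le \mathrm{Var}(r'),$$ with equality if and only if $|\langle s|U|s\rangle|=1$.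
   Context: A Fibonacci string is a bit string with no two consecutive zeros. The control-free echo-verification circuit: let $V$ be the $n$-qubit unitary with $V|0x_2\cdots x_n\rangle=|x_2 0 x_3\cdots x_n\rangle$ and $V|1x_2\cdots x_n\rangle=|x_2 1 (x_3\oplus s_3)\cdots(x_n\oplus s_n)\rangle$; starting from $|0^n\rangle$ apply $H$ on qubit 1, then $V$, $U$, $V^\dagger$, $H$ on qubit 1, and measure all qubits obtaining $x_1,\dots,x_n$; set $r=(-1)^{x_1}$ if $x_2=\cdots=x_n=0$ and $r=0$ otherwise. *)

(* Defs.v *)
(* Amplitudes live in an arbitrary numeric closed field C
   (e.g. the complex numbers); probabilities/expectations are elements of C
   that are real. *)
From HB Require Import structures.
From mathcomp Require Import all_boot all_order all_algebra.
Set Implicit Arguments. Unset Strict Implicit. Unset Printing Implicit Defensive.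
Import Order.TTheory GRing.Theory Num.Theory.
Local Open Scope ring_scope.

Section Quantum.
Variable C : numClosedFieldType.

(* Operators on the Hilbert space with computational basis T (a finType)
   are given by their matrix entries A y x = <y|A|x>; states by amplitudes. *)
Definition appl (T : finType) (A : T -> T -> C) (v : T -> C) : T -> C :=
  fun y => \sum_x A y x * v x.
Definition ket (T : finType) (x : T) : T -> C := fun y => (y == x)%:R.
Definition inner (T : finType) (u v : T -> C) : C := \sum_x (u x)^* * v x.
Definition unitary (T : finType) (A : T -> T -> C) : Prop :=
  forall x y : T, \sum_z (A z x)^* * A z y = (x == y)%:R.

Definition hadC (a b : bool) : C := (if a && b then -1 else 1) / sqrtC 2.

Variable n : nat.
(* n-bit strings; qubit k (1-based in the paper) is index k-1 here *)
Definition bits := (n.-tuple bool).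
Definition bit (x : bits) (k : nat) : bool := nth false x k.
Definition zeros : bits := [tuple false | _ < n].

Definition fibonacci (y : bits) : bool :=
  [forall i : 'I_n, (i.+1 < n)%N ==> (bit y i || bit y i.+1)].
Definition goodS (y : bits) : bool :=
  [&& fibonacci y, ~~ bit y 0 & bit y 1].
Definition inS (v : bits -> C) : Prop := forall y, ~~ goodS y -> v y = 0.

Definition H1 (y x : bits) : C :=
  if [forall i : 'I_n, ((i : nat) != 0%N) ==> (tnth y i == tnth x i)]
  then hadC (bit y 0) (bit x 0) else 0.

Definition vmap (s x : bits) : bits :=
  [tuple (if (i : nat) == 0%N then bit x 1
          else if (i : nat) == 1%N then bit x 0
          else xorb (bit x i) (bit x 0 && bit s i)) | i < n].
Definition Vop (s : bits) (y x : bits) : C := (y == vmap s x)%:R.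
Definition Vdag (s : bits) (y x : bits) : C := (Vop s x y)^*.

Definition echo_state (s : bits) (U : bits -> bits -> C) : bits -> C :=
  appl H1 (appl (Vdag s) (appl U (appl (Vop s) (appl H1 (ket zeros))))).
Definition echo_prob s U (x : bits) : C := `|echo_state s U x| ^+ 2.
Definition echo_r (x : bits) : C :=
  if [forall i : 'I_n, ((i : nat) != 0%N) ==> ~~ tnth x i]
  then (if bit x 0 then -1 else 1) else 0.
Definition echo_mean s U : C := \sum_x echo_prob s U x * echo_r x.
Definition echo_var s U : C :=
  \sum_x echo_prob s U x * (echo_r x) ^+ 2 - (echo_mean s U) ^+ 2.

(* vanilla Hadamard test: ancilla (bool) and register (bits) *)
Definition HA (p q : bool * bits) : C := hadC p.1 q.1 * (p.2 == q.2)%:R.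
Definition CU (U : bits -> bits -> C) (p q : bool * bits) : C :=
  (p.1 == q.1)%:R * (if q.1 then U p.2 q.2 else (p.2 == q.2)%:R).
Definition htest_state (s : bits) (U : bits -> bits -> C) : bool * bits -> C :=
  appl HA (appl (CU U) (appl HA (ket (false, s)))).
Definition htest_prob s U (a : bool) : C :=
  \sum_y `|htest_state s U (a, y)| ^+ 2.
Definition htest_r (a : bool) : C := if a then -1 else 1.
Definition htest_mean s U : C := \sum_a htest_prob s U a * htest_r a.
Definition htest_var s U : C :=
  \sum_a htest_prob s U a * (htest_r a) ^+ 2 - (htest_mean s U) ^+ 2.

End Quantum.

(* Main.v *)
Require Import Defs.
From HB Require Import structures.
From mathcomp Require Import all_boot all_order all_algebra.
From mathcomp Require Import ring.
Import Order.TTheory GRing.Theory Num.Theory.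
Set Implicit Arguments. Unset Strict Implicit.
Local Open Scope ring_scope.

Lemma sum_delta (C : numClosedFieldType) (T : finType) (a : T) (F : T -> C) :
  \sum_x F x * (x == a)%:R = F a.
Proof.
rewrite (bigD1 a) //= eqxx mulr1 big1 ?addr0 // => x /negbTE ->.
by rewrite mulr0.
Qed.

Lemma sum_delta' (C : numClosedFieldType) (T : finType) (a : T) (F : T -> C) :
  \sum_x (x == a)%:R * F x = F a.
Proof. rewrite -(sum_delta a F); apply: eq_bigr => x _; exact: mulrC. Qed.

Definition kk (C : numClosedFieldType) : C := (sqrtC 2)^-1.

Lemma kkE (C : numClosedFieldType) : kk C * kk C = 2^-1.
Proof. by rewrite /kk -expr2 exprVn sqrtCK. Qed.

Lemma hadCE (C : numClosedFieldType) a b :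
  hadC C a b = (if a && b then -1 else 1) * kk C.
Proof. by []. Qed.

Definition e1 (n : nat) : bits n := [tuple (i : nat) == 0%N | i < n].

Lemma bit_tnth n (x : bits n) (i : 'I_n) : bit x i = tnth x i.
Proof. by rewrite /bit (tnth_nth false). Qed.

Lemma restz n (hn : (0 < n)%N) (x : bits n) :
  [forall i : 'I_n, ((i : nat) != 0%N) ==> ~~ tnth x i] =
  (x == zeros n) || (x == e1 n).
Proof.
apply/idP/idP.
- move/forallP => H.
  case b: (bit x 0).
  + apply/orP; right; apply/eqP; apply: eq_from_tnth => i.
    rewrite tnth_mktuple; case: eqP => [i0|/eqP i0].
    * have -> : i = Ordinal hn by apply: val_inj.
      by rewrite -bit_tnth.
    * by move: (H i); rewrite i0 /= => /negbTE.
  + apply/orP; left; apply/eqP; apply: eq_from_tnth => i.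
    rewrite tnth_mktuple; case: (eqVneq (i : nat) 0%N) => [i0|i0].
    * have -> : i = Ordinal hn by apply: val_inj.
      by rewrite -bit_tnth.
    * by move: (H i); rewrite i0 /= => /negbTE.
- case/orP => /eqP -> ; apply/forallP => i; apply/implyP => i0;
  by rewrite tnth_mktuple // (negbTE i0).
Qed.

Lemma tnth_zeros n i : tnth (zeros n) i = false.
Proof. by rewrite tnth_mktuple. Qed.
Lemma tnth_e1 n i : tnth (e1 n) i = ((i : nat) == 0%N).
Proof. by rewrite tnth_mktuple. Qed.

Lemma bit_zeros0 n (hn : (0 < n)%N) : bit (zeros n) 0 = false.
Proof. by rewrite (bit_tnth _ (Ordinal hn)) tnth_zeros. Qed.
Lemma bit_e10 n (hn : (0 < n)%N) : bit (e1 n) 0 = true.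
Proof. by rewrite (bit_tnth _ (Ordinal hn)) tnth_e1. Qed.

Lemma zeros_neq_e1 n (hn : (0 < n)%N) : (e1 n == zeros n) = false.
Proof.
apply/negbTE/negP => /eqP E.
by move: (bit_e10 hn); rewrite E bit_zeros0.
Qed.

Lemma H1_rest (C : numClosedFieldType) n (hn : (0 < n)%N) (z x : bits n) :
  (forall i : 'I_n, (i : nat) != 0%N -> tnth z i = false) ->
  H1 C z x = hadC C (bit z 0) (bit x 0) * ((x == zeros n)%:R + (x == e1 n)%:R).
Proof.
move=> Hz; rewrite /H1.
have -> : [forall i : 'I_n, ((i : nat) != 0%N) ==> (tnth z i == tnth x i)] =
   [forall i : 'I_n, ((i : nat) != 0%N) ==> ~~ tnth x i].
  apply: eq_forallb => i; case: (eqVneq (i : nat) 0%N) => //= i0.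
  by rewrite Hz //; case: (tnth x i).
rewrite restz //.
case: (eqVneq x (zeros n)) => [->|xz]; first by rewrite eq_sym zeros_neq_e1 //= addr0 mulr1.
case: (eqVneq x (e1 n)) => [->|xe]; first by rewrite /= add0r mulr1.
by rewrite /= addr0 mulr0.
Qed.

Lemma applH1 (C : numClosedFieldType) n (hn : (0 < n)%N) (z : bits n) v :
  (forall i : 'I_n, (i : nat) != 0%N -> tnth z i = false) ->
  appl (@H1 C n) v z = hadC C (bit z 0) false * v (zeros n)
                     + hadC C (bit z 0) true * v (e1 n).
Proof.
move=> Hz; rewrite /appl.
rewrite (eq_bigr (fun x => hadC C (bit z 0) (bit x 0) * v x * (x == zeros n)%:R
   + hadC C (bit z 0) (bit x 0) * v x * (x == e1 n)%:R)); last first.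
  by move=> x _; rewrite H1_rest //; ring.
rewrite big_split /= !(sum_delta _ (fun x => hadC C (bit z 0) (bit x 0) * v x)).
by rewrite bit_zeros0 // bit_e10.
Qed.

Lemma bit_zeros n k : bit (zeros n) k = false.
Proof.
case: (ltnP k n) => h; first by rewrite (bit_tnth _ (Ordinal h)) tnth_zeros.
by rewrite /bit nth_default // size_tuple.
Qed.

Lemma bit_e1 n (i : 'I_n) : (i : nat) != 0%N -> bit (e1 n) i = false.
Proof. by move=> i0; rewrite bit_tnth tnth_e1 (negbTE i0). Qed.

Lemma vmap_zeros n (s : bits n) : vmap s (zeros n) = zeros n.
Proof.
apply: eq_from_tnth => i; rewrite !tnth_mktuple !bit_zeros.
by case: ifP => //; case: ifP.
Qed.

Lemma vmap_e1 n (h1 : (1 < n)%N) (s : bits n) :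
  bit s 0 = false -> bit s 1 = true -> vmap s (e1 n) = s.
Proof.
have hn : (0 < n)%N by apply: ltn_trans h1.
move=> hs0 hs1; apply: eq_from_tnth => i; rewrite !tnth_mktuple.
case: eqP => [i0|/eqP i0].
  rewrite (@bit_e1 n (Ordinal h1)) //.
  by rewrite -bit_tnth i0 hs0.
case: eqP => [i1|/eqP i1].
  rewrite bit_e10 //.
  by rewrite -bit_tnth i1 hs1.
by rewrite bit_e1 // bit_e10 // bit_tnth.
Qed.

Lemma rest_cond n (hn : (0 < n)%N) (z x : bits n) :
  (forall i : 'I_n, (i : nat) != 0%N -> tnth z i = false) ->
  ([forall i : 'I_n, ((i : nat) != 0%N) ==> (tnth z i == tnth x i)] =
   (x == zeros n) || (x == e1 n)) /\
  ([forall i : 'I_n, ((i : nat) != 0%N) ==> (tnth x i == tnth z i)] =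
   (x == zeros n) || (x == e1 n)).
Proof.
move=> Hz; rewrite -restz //; split; apply: eq_forallb => i;
  case: (eqVneq (i : nat) 0%N) => //= i0;
  by rewrite Hz //; case: (tnth x i).
Qed.

Lemma H1_rest' (C : numClosedFieldType) n (hn : (0 < n)%N) (z x : bits n) :
  (forall i : 'I_n, (i : nat) != 0%N -> tnth z i = false) ->
  H1 C x z = hadC C (bit x 0) (bit z 0) * ((x == zeros n)%:R + (x == e1 n)%:R).
Proof.
move=> Hz; rewrite /H1 (proj2 (rest_cond hn x Hz)).
case: (eqVneq x (zeros n)) => [->|xz]; first by rewrite eq_sym zeros_neq_e1 //= addr0 mulr1.
case: (eqVneq x (e1 n)) => [->|xe]; first by rewrite /= add0r mulr1.
by rewrite /= addr0 mulr0.
Qed.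

Lemma zeros_rest n (i : 'I_n) : (i : nat) != 0%N -> tnth (zeros n) i = false.
Proof. by rewrite tnth_zeros. Qed.
Lemma e1_rest n (i : 'I_n) : (i : nat) != 0%N -> tnth (e1 n) i = false.
Proof. by rewrite tnth_e1 => /negbTE. Qed.

Lemma phi0E (C : numClosedFieldType) n (hn : (0 < n)%N) (x : bits n) :
  appl (@H1 C n) (ket C (zeros n)) x =
  kk C * (x == zeros n)%:R + kk C * (x == e1 n)%:R.
Proof.
rewrite /appl /ket sum_delta H1_rest' //; last exact: zeros_rest.
rewrite bit_zeros.
case: (eqVneq x (zeros n)) => [->|xz].
  by rewrite eq_sym zeros_neq_e1 // bit_zeros hadCE /= mul1r mulrDr.
case: (eqVneq x (e1 n)) => [->|xe].
  by rewrite bit_e10 // hadCE /= mul1r mulrDr.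
by rewrite !mulr0 addr0 mulr0.
Qed.

Lemma applVdag (C : numClosedFieldType) n (s : bits n) (f : bits n -> C) y :
  appl (@Vdag C n s) f y = f (vmap s y).
Proof.
rewrite /appl /Vdag /Vop.
under eq_bigr => x _ do rewrite conjC_nat.
exact: sum_delta'.
Qed.

Lemma phiE (C : numClosedFieldType) n (h1 : (1 < n)%N) (s : bits n) y :
  bit s 0 = false -> bit s 1 = true ->
  appl (@Vop C n s) (appl (@H1 C n) (ket C (zeros n))) y =
  kk C * (y == zeros n)%:R + kk C * (y == s)%:R.
Proof.
have hn : (0 < n)%N by apply: ltn_trans h1.
move=> hs0 hs1; rewrite /appl.
under eq_bigr => x _ do rewrite -/(appl _ _ x) phi0E // mulrDr !mulrA.
rewrite big_split /=.
rewrite !(sum_delta _ (fun x => (@Vop C n s y x) * kk C)) /Vop vmap_zeros vmap_e1 //.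
by rewrite mulrC [X in _ + X]mulrC.
Qed.


Lemma Uzeros (C : numClosedFieldType) n (U : bits n -> bits n -> C) :
  (forall y, appl U (ket C (zeros n)) y = ket C (zeros n) y) ->
  forall y, U y (zeros n) = (y == zeros n)%:R.
Proof. by move=> H y; rewrite -[RHS]H /appl /ket sum_delta. Qed.

Lemma s_neq0 n (s : bits n) : bit s 1 = true -> (zeros n == s) = false.
Proof. by move=> hs1; apply/negbTE/negP => /eqP E; move: hs1; rewrite -E bit_zeros. Qed.

Lemma U0s (C : numClosedFieldType) n (U : bits n -> bits n -> C) (s : bits n) :
  bit s 1 = true -> unitary U ->
  (forall y, appl U (ket C (zeros n)) y = ket C (zeros n) y) ->
  U (zeros n) s = 0.
Proof.
move=> hs1 HU H0; have := HU (zeros n) s.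
under eq_bigr => z _ do rewrite (Uzeros H0) conjC_nat.
by rewrite sum_delta' s_neq0.
Qed.

Lemma echo_amps (C : numClosedFieldType) n (h1 : (1 < n)%N) (s : bits n)
    (U : bits n -> bits n -> C) :
  bit s 0 = false -> bit s 1 = true -> unitary U ->
  (forall y, appl U (ket C (zeros n)) y = ket C (zeros n) y) ->
  echo_state s U (zeros n) = (1 + U s s) / 2 /\
  echo_state s U (e1 n) = (1 - U s s) / 2.
Proof.
have hn : (0 < n)%N by apply: ltn_trans h1.
move=> hs0 hs1 HU H0.
have chiE : forall y, appl U (appl (@Vop C n s) (appl (@H1 C n) (ket C (zeros n)))) y
    = kk C * U y (zeros n) + kk C * U y s.
  move=> y; rewrite {1}/appl.
  under eq_bigr => x _ do rewrite phiE // mulrDr !mulrA.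
  rewrite big_split /= !(sum_delta _ (fun x => U y x * kk C)).
  by rewrite mulrC [X in _ + X]mulrC.
rewrite /echo_state !applH1 //; try (by move=> i; apply: zeros_rest); try (by move=> i; apply: e1_rest).
rewrite !applVdag vmap_zeros vmap_e1 // !chiE (Uzeros H0) (U0s hs1 HU H0) eqxx.
rewrite (Uzeros H0) eq_sym s_neq0 // bit_zeros bit_e10 // !hadCE /= -(kkE C).
split; ring.
Qed.

Lemma echo_r_E (C : numClosedFieldType) n (hn : (0 < n)%N) (x : bits n) :
  echo_r C x = (x == zeros n)%:R - (x == e1 n)%:R.
Proof.
rewrite /echo_r restz //.
case: (eqVneq x (zeros n)) => [->|xz].
  by rewrite eq_sym zeros_neq_e1 //= bit_zeros subr0.
case: (eqVneq x (e1 n)) => [->|xe].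
  by rewrite /= bit_e10 // sub0r.
by rewrite /= subr0.
Qed.

Lemma echo_moments (C : numClosedFieldType) n (hn : (0 < n)%N) (s : bits n)
    (U : bits n -> bits n -> C) :
  echo_mean s U = echo_prob s U (zeros n) - echo_prob s U (e1 n) /\
  \sum_x echo_prob s U x * (echo_r C x) ^+ 2 =
     echo_prob s U (zeros n) + echo_prob s U (e1 n).
Proof.
rewrite /echo_mean; split.
  under eq_bigr => x _ do rewrite echo_r_E // mulrBr.
  by rewrite sumrB !sum_delta.
have E : forall x : bits n, ((x == zeros n)%:R - (x == e1 n)%:R : C) ^+ 2
    = (x == zeros n)%:R + (x == e1 n)%:R.
  move=> x; case: (eqVneq x (zeros n)) => [->|xz].
    by rewrite eq_sym zeros_neq_e1 //= subr0 expr1n addr0.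
  case: (eqVneq x (e1 n)) => [_|xe].
    by rewrite /= sub0r sqrrN expr1n add0r.
  by rewrite /= subr0 expr0n addr0.
under eq_bigr => x _ do rewrite echo_r_E // E mulrDr.
by rewrite big_split !sum_delta.
Qed.

Lemma pair_sum (C : numClosedFieldType) (T : finType) (F : bool * T -> C) :
  \sum_q F q = \sum_y F (true, y) + \sum_y F (false, y).
Proof.
rewrite (eq_bigr (fun q => F (q.1, q.2))); last by case.
by rewrite -(pair_bigA _ (fun b y => F (b, y))) big_bool.
Qed.

Lemma hstate (C : numClosedFieldType) n (s : bits n) (U : bits n -> bits n -> C) a y :
  htest_state s U (a, y) = ((y == s)%:R + (if a then -1 else 1) * U y s) / 2.
Proof.
have phi1 : forall q, appl (@HA C n) (ket C (false, s)) q = kk C * (q.2 == s)%:R.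
  move=> [b y']; rewrite /appl /ket sum_delta /HA hadCE /=.
  by rewrite andbF mul1r eq_sym.
have phi2 : forall b y', appl (CU U) (appl (@HA C n) (ket C (false, s))) (b, y')
    = if b then kk C * U y' s else kk C * (y' == s)%:R.
  move=> b y'; rewrite {1}/appl pair_sum.
  under eq_bigr => z _ do rewrite phi1 /CU /=.
  under [X in _ + X = _]eq_bigr => z _ do rewrite phi1 /CU /=.
  case: b => /=.
  - rewrite [X in _ + X]big1 ?addr0; last by move=> z _; rewrite !mul0r.
    rewrite (eq_bigr (fun z => (U y' z * kk C) * (z == s)%:R)); last first.
      by move=> z _; rewrite mul1r mulrA.
    by rewrite sum_delta mulrC.
  - rewrite big1 ?add0r; last by move=> z _; rewrite !mul0r.
    rewrite (eq_bigr (fun z => (kk C * (z == s)%:R) * (z == y')%:R)); last first.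
      by move=> z _; rewrite mul1r eq_sym mulrC.
    by rewrite sum_delta.
rewrite /htest_state {1}/appl pair_sum.
rewrite (eq_bigr (fun z => (hadC C a true * (kk C * U z s)) * (z == y)%:R)); last first.
  by move=> z _; rewrite phi2 /HA /= mulrAC eq_sym.
rewrite [X in _ + X](eq_bigr (fun z => (hadC C a false * (kk C * (z == s)%:R)) * (z == y)%:R)); last first.
  by move=> z _; rewrite phi2 /HA /= mulrAC [y == z]eq_sym.
rewrite !sum_delta !hadCE -(kkE C) /=.
by case: a => /=; ring.
Qed.

Lemma conj_half (C : numClosedFieldType) (x : C) : (x / 2)^* = x^* / 2.
Proof. by rewrite rmorphM fmorphV rmorph_nat. Qed.

Lemma conjD1 (C : numClosedFieldType) (x : C) : (1 + x)^* = 1 + x^*.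
Proof. by rewrite rmorphD rmorph1. Qed.
Lemma conjB1 (C : numClosedFieldType) (x : C) : (1 - x)^* = 1 - x^*.
Proof. by rewrite rmorphB rmorph1. Qed.

Lemma hprob (C : numClosedFieldType) n (s : bits n) (U : bits n -> bits n -> C) a :
  unitary U ->
  htest_prob s U a = (2 + (if a then -1 else 1) * (U s s + (U s s)^*)) / 4.
Proof.
move=> HU; rewrite /htest_prob.
have E : forall y, `|htest_state s U (a, y)| ^+ 2 =
   (y == s)%:R * ((1 + (if a then -1 else 1) * (U s s + (U s s)^*)) / 4)
   + (U y s)^* * U y s / 4.
  move=> y; rewrite normCK hstate conj_half rmorphD rmorphM rmorph_nat.
  have -> : (4 : C) = 2 * 2 by rewrite -natrM.
  rewrite invfM.
  case: (eqVneq y s) => [->|ys] /=; case: a => /=; rewrite ?rmorphN ?rmorph1 ?conjC1 ?conjCN1; ring.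
rewrite (eq_bigr _ (fun y _ => E y)) big_split /= sum_delta'.
rewrite -mulr_suml -/(\sum_y (U y s)^* * U y s) HU eqxx.
have -> : (2 : C) = 1 + 1 by [].
by clear E; case: a => /=; ring.
Qed.

Lemma mE (C : numClosedFieldType) n (s : bits n) (U : bits n -> bits n -> C) :
  inner (ket C s) (appl U (ket C s)) = U s s.
Proof.
rewrite /inner /ket.
under eq_bigr => x _ do rewrite conjC_nat.
by rewrite sum_delta' /appl sum_delta.
Qed.

Lemma normm_le1 (C : numClosedFieldType) n (s : bits n) (U : bits n -> bits n -> C) :
  unitary U -> `|U s s| ^+ 2 <= 1.
Proof.
move=> HU; have := HU s s; rewrite eqxx.
under eq_bigr => z _ do rewrite -normCKC.
rewrite (bigD1 s) //= => E.
have : `|U s s| ^+ 2 <= `|U s s| ^+ 2 + \sum_(i | i != s) `|U i s| ^+ 2.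
  by rewrite lerDl sumr_ge0 // => z _; rewrite exprn_ge0.
by rewrite E.
Qed.

Unset Implicit Arguments.
Set Strict Implicit.

Theorem mainTheorem5 (C : numClosedFieldType) (n : nat) (s : bits n)
    (U : bits n -> bits n -> C) :
  (3 <= n)%N ->
  bit s 0 = false -> bit s 1 = true ->
  unitary U ->
  (forall y, appl U (ket C (zeros n)) y = ket C (zeros n) y) ->
  (forall v : bits n -> C, inS v -> inS (appl U v)) ->
  inS (ket C s) ->
  let m := inner (ket C s) (appl U (ket C s)) in
  [/\ htest_mean s U = 'Re m,
      htest_var s U = 1 - ('Re m) ^+ 2,
      echo_var s U = htest_var s U - (1 - `|m| ^+ 2) / 2,
      echo_var s U <= htest_var s U
    & echo_var s U = htest_var s U <-> `|m| = 1].
Proof.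
move=> h3 hs0 hs1 HU H0 _ _ m.
have h1 : (1 < n)%N by apply: leq_trans h3.
have hn : (0 < n)%N by apply: ltn_trans h1.
have mm : m = U s s by rewrite /m mE.
have le1 := normm_le1 s HU.
rewrite -mm in le1.
have Hmean : htest_mean s U = 'Re m.
  rewrite /htest_mean big_bool /= !hprob // -mm ReE.
  have -> : (4 : C) = 2 * 2 by rewrite -natrM.
  by rewrite invfM; field.
have Hvar : htest_var s U = 1 - ('Re m) ^+ 2.
  rewrite /htest_var Hmean big_bool /= !hprob // -mm.
  have -> : (4 : C) = 2 * 2 by rewrite -natrM.
  rewrite invfM -[2 : C]/(1 + 1); by field.
have Hecho : echo_var s U = htest_var s U - (1 - `|m| ^+ 2) / 2.
  rewrite Hvar /echo_var.
  have [-> ->] := echo_moments hn s U.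
  rewrite /echo_prob; have [-> ->] := echo_amps h1 hs0 hs1 HU H0.
  rewrite -mm !normCK ReE !conj_half conjD1 conjB1.
  by field.
have Hge : 0 <= (1 - `|m| ^+ 2) / 2.
  by rewrite divr_ge0 // subr_ge0.
split => //.
- by rewrite Hecho gerBl.
- rewrite Hecho; split.
  + move=> h.
    have h0 : (1 - `|m| ^+ 2) / 2 = 0.
      by rewrite -[LHS](subKr (htest_var s U)) h subrr.
    move: h0 => /eqP; rewrite mulf_eq0 invr_eq0 pnatr_eq0 orbF subr_eq0 eq_sym.
    by rewrite sqrp_eq1 // => /eqP.
  + by move=> ->; rewrite expr1n subrr mul0r subr0.
Qed.
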